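(* Let $\mathcal T$ be a rooted binary phylogenetic $X$-tree. Then $|\mathcal C(\mathcal T)|\le (|X|+1)^{4c_{\mathcal T}-2}$.
   Context: A rooted binary phylogenetic $X$-tree is a rooted tree with leaf set $X$ in which the root has degree two and all other interior vertices have degree three. A cherry is a pair of leaves adjacent to a common vertex; $c_{\mathcal T}$ is the number of cherries of $\mathcal T$. For a leaf $a$, $\mathcal T[-a]$ is obtained by deleting $a$ and suppressing the resulting non-root degree-2 vertex (if the tree is a single vertex $a$, deleting it yields the empty tree $\emptyset$). The set $\mathcal C(\mathcal T)$ of cherry-picked trees of $\mathcal T$ is the smallest set of trees (leaf-labeled, up to isomorphism preserving labels) containing $\mathcal T$ and $\emptyset$ such that whenever $\mathcal T'\in\mathcal C(\mathcal T)$ and $\{a,b\}$ is a cherry of $\mathcal T'$, both $\mathcal T'[-a]$ and $\mathcal T'[-b]$ are in $\mathcal C(\mathcal T)$. *)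

(* Defs.v *)
From mathcomp Require Import all_boot.
Set Implicit Arguments. Unset Strict Implicit. Unset Printing Implicit Defensive.

(* A [Node l r] is an interior vertex with two children; the root of a tree
   of the form [Node _ _] has degree two and every other interior vertex has
   degree three. *)
Inductive ptree : Type :=
| Leaf of nat
| Node of ptree & ptree.

Fixpoint leaves (t : ptree) : seq nat :=
  match t with
  | Leaf a => [:: a]
  | Node l r => leaves l ++ leaves r
  end.

(* t is a rooted binary phylogenetic X-tree for X = leaves t (distinct labels). *)
Definition phylo (t : ptree) : bool := uniq (leaves t).

Definition is_node (t : ptree) : bool := if t is Node _ _ then true else false.

Fixpoint iso (t u : ptree) : bool :=
  match t, u with
  | Leaf a, Leaf b => a == b
  | Node l r, Node l' r' => (iso l l' && iso r r') || (iso l r' && iso r l')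
  | _, _ => false
  end.

(* Trees or the empty tree (None = the empty tree). *)
Definition oiso (t u : option ptree) : bool :=
  match t, u with
  | None, None => true
  | Some t, Some u => iso t u
  | _, _ => false
  end.

Fixpoint has_cherry (t : ptree) (a b : nat) : bool :=
  match t with
  | Leaf _ => false
  | Node l r =>
      [|| match l, r with
                      | Leaf x, Leaf y => ((x == a) && (y == b)) || ((x == b) && (y == a))
                      | _, _ => false
                      end,
          has_cherry l a b | has_cherry r a b]
  end.

Fixpoint cherries (t : ptree) : nat :=
  match t with
  | Leaf _ => 0
  | Node (Leaf _) (Leaf _) => 1
  | Node l r => cherries l + cherries r
  end.

(* T[-a]: delete leaf a and suppress the resulting degree-2 vertex
   (if the parent of a was the root, the root disappears and the sibling
   subtree becomes the tree); deleting the single vertex a gives None. *)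
Fixpoint del (a : nat) (t : ptree) : option ptree :=
  match t with
  | Leaf b => if a == b then None else Some (Leaf b)
  | Node l r =>
      match del a l, del a r with
      | None, None => None
      | None, Some r' => Some r'
      | Some l', None => Some l'
      | Some l', Some r' => Some (Node l' r')
      end
  end.

(* The cherry-picked trees C(T) (as concrete representatives; the set C(T)
   itself is this set taken up to label-preserving isomorphism [oiso]). *)
Inductive cherry_picked (T : ptree) : option ptree -> Prop :=
| cp_self : cherry_picked T (Some T)
| cp_empty : cherry_picked T None
| cp_step (t : ptree) (a b : nat) :
    cherry_picked T (Some t) -> has_cherry t a b ->
    cherry_picked T (del a t).

(* Main.v *)
Require Import Defs.
From HB Require Import structures.
From mathcomp Require Import all_boot.
From mathcomp Require Import zify.
Set Implicit Arguments. Unset Strict Implicit.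

Fixpoint ptree_eqb (t u : ptree) : bool :=
  match t, u with
  | Leaf a, Leaf b => a == b
  | Node l r, Node l' r' => ptree_eqb l l' && ptree_eqb r r'
  | _, _ => false
  end.

Lemma ptree_eqP : Equality.axiom ptree_eqb.
Proof.
elim=> [a|l IHl r IHr] [b|l' r'] /=; try by constructor.
  by apply: (iffP eqP) => [->|[]].
apply: (iffP andP) => [[/IHl -> /IHr ->]|[<- <-]] //.
by split; [apply/IHl|apply/IHr].
Qed.

HB.instance Definition _ := hasDecEq.Build ptree ptree_eqP.

Fixpoint cp (T : ptree) : seq ptree :=
  match T with
  | Leaf a => [:: Leaf a]
  | Node L R => [seq Node l r | l <- cp L, r <- cp R] ++ [seq Leaf y | y <- leaves L ++ leaves R]
  end.

Lemma iso_refl t : iso t t.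
Proof. by elim: t => [a|l IHl r IHr] /=; rewrite ?eqxx ?IHl ?IHr. Qed.

Lemma self_cp T : T \in cp T.
Proof.
elim: T => [a|L IHL R IHR] /=; first by rewrite inE.
by rewrite mem_cat; apply/orP; left; apply/allpairsP; exists (L, R).
Qed.

Lemma cp_sub T t : t \in cp T -> subseq (leaves t) (leaves T).
Proof.
elim: T t => [a|L IHL R IHR] t /=.
  by rewrite inE => /eqP -> /=; rewrite eqxx.
rewrite mem_cat => /orP [/allpairsP [[l r] /= [hl hr ->]]|/mapP [y hy ->]] /=.
  by apply: cat_subseq; [exact: IHL hl|exact: IHR hr].
by rewrite sub1seq.
Qed.

Lemma del_notin a t : a \notin leaves t -> del a t = Some t.
Proof.
elim: t => [b|l IHl r IHr] /=.
  by rewrite inE => /negPf ->.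
by rewrite mem_cat negb_or => /andP [/IHl -> /IHr ->].
Qed.

Lemma del_some a b t : b \in leaves t -> b != a -> del a t != None.
Proof.
elim: t => [c|l IHl r IHr] /=.
  by rewrite inE => /eqP -> hne; rewrite eq_sym in hne; rewrite (negPf hne).
rewrite mem_cat => /orP [h|h] hne.
  by move: (IHl h hne); case: (del a l) => // l'; case: (del a r).
by move: (IHr h hne); case: (del a r) => // r'; case: (del a l).
Qed.

Lemma cherry_mem t a b : has_cherry t a b -> (a \in leaves t) && (b \in leaves t).
Proof.
elim: t => [c|l IHl r IHr] //=.
rewrite !mem_cat.
case/or3P.
- case: l {IHl} => [x|? ?] //; case: r {IHr} => [y|? ?] //=.
  by case/orP => /andP [/eqP -> /eqP ->]; rewrite !inE !eqxx ?orbT.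
- by case/IHl/andP => -> ->.
- by case/IHr/andP => -> ->; rewrite !orbT.
Qed.

Lemma cherry_neq t a b : uniq (leaves t) -> has_cherry t a b -> a != b.
Proof.
elim: t => [c|l IHl r IHr] //=.
rewrite cat_uniq => /and3P [ul hd ur].
case/or3P.
- case: l IHl ul hd => [x|? ?] //; case: r IHr ur => [y|? ?] //= _ _ _ _.
  rewrite inE orbF => hne.
  case/orP => /andP [/eqP <- /eqP <-] //; by rewrite eq_sym.
- exact: IHl.
- exact: IHr.
Qed.

Lemma cp_step T t a b : uniq (leaves T) -> t \in cp T -> has_cherry t a b ->
  if del a t is Some t' then t' \in cp T else true.
Proof.
elim: T t => [c|L IHL R IHR] t /=.
  by move=> _; rewrite inE => /eqP ->.
rewrite cat_uniq => /and3P [uL hd uR].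
rewrite mem_cat => /orP [/allpairsP [[l r] /= [hl hr ->]]|/mapP [y hy ->]] //=.
have sl := cp_sub hl; have sr := cp_sub hr.
case/or3P.
- move: hl sl hr sr; case: (l : ptree) => [x|? ?] // hl sl; case: (r : ptree) => [y|? ?] //= hr sr.
  rewrite sub1seq in sl; rewrite sub1seq in sr.
  case/orP => /andP [/eqP ? /eqP ?]; subst; rewrite eqxx; case: ifP => _ //=;
    rewrite mem_cat; apply/orP; right; apply: map_f; rewrite mem_cat ?sl ?sr ?orbT //.
- move=> hc.
  have ul : uniq (leaves l) := subseq_uniq sl uL.
  move/andP: (cherry_mem hc) => [al bl].
  have anr : a \notin leaves r.
    apply/negP => ar; move/hasPn: hd => /(_ a (mem_subseq sr ar)).
    by rewrite (mem_subseq sl al).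
  rewrite (del_notin anr).
  have := IHL l uL hl hc.
  have : b != a by rewrite eq_sym (cherry_neq ul hc).
  move/(del_some bl).
  case: (del a l) => // l' _ hl'.
  by rewrite mem_cat; apply/orP; left; apply/allpairsP; exists (l', r).
- move=> hc.
  have ur : uniq (leaves r) := subseq_uniq sr uR.
  move/andP: (cherry_mem hc) => [ar br].
  have anl : a \notin leaves l.
    apply/negP => al; move/hasPn: hd => /(_ a (mem_subseq sr ar)).
    by rewrite (mem_subseq sl al).
  rewrite (del_notin anl).
  have := IHR r uR hr hc.
  have : b != a by rewrite eq_sym (cherry_neq ur hc).
  move/(del_some br).
  case: (del a r) => // r' _ hr'.
  by rewrite mem_cat; apply/orP; left; apply/allpairsP; exists (l, r').
Qed.

Lemma cp_cover T u : phylo T -> cherry_picked T u ->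
  if u is Some t then t \in cp T else true.
Proof.
move=> uT; elim => [|//|t a b _ ht hc].
  exact: self_cp.
exact: (cp_step uT ht hc).
Qed.

Lemma leaves_pos t : 0 < size (leaves t).
Proof. by elim: t => [a|l IHl r IHr] //=; rewrite size_cat addn_gt0 IHl. Qed.

Lemma node_cherries t : is_node t -> 0 < cherries t.
Proof.
elim: t => [a|l IHl r IHr] //= _.
case: l IHl => [x|l1 l2] IHl; case: r IHr => [y|r1 r2] IHr //=.
- by rewrite add0n; apply: IHr.
- by rewrite addn0; apply: IHl.
- by rewrite addn_gt0 IHl.
Qed.

Lemma cherries_node L R : is_node L || is_node R ->
  cherries (Node L R) = cherries L + cherries R.
Proof. by case: L => [x|? ?]; case: R => [y|? ?]. Qed.

Lemma pow_lemma x k : 2 <= k -> x ^ k + x + 1 <= (x + 1) ^ k.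
Proof.
elim: k => [|k IH] //; case: k IH => [|k] IH // _.
case: k IH => [|k] IH.
  rewrite !expnS !expn0; nia.
rewrite (expnS x k.+2) (expnS (x + 1) k.+2).
move: (IH isT).
move: (x ^ k.+2) ((x + 1) ^ k.+2) => P Q h.
have := leq_mul (leqnn (x + 1)) h.
nia.
Qed.

Lemma exp_mono m n e : m <= n -> m ^ e <= n ^ e.
Proof. by case: e => [|e] // h; rewrite leq_exp2r. Qed.

Lemma size_cp T : size (cp T) <= size (leaves T) ^ (2 * cherries T).
Proof.
elim: T => [a|L IHL R IHR] //.
rewrite [cp _]/= [leaves (Node _ _)]/= size_cat size_allpairs size_map size_cat.
case: (boolP (is_node L || is_node R)) => hn; last first.
  by case: L {IHL} hn => [x|? ?]; case: R {IHR} => [y|? ?].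
rewrite (cherries_node hn).
have pL := leaves_pos L; have pR := leaves_pos R.
set nL := size (leaves L) in IHL pL *; set nR := size (leaves R) in IHR pR *.
have hk : 2 <= 2 * (cherries L + cherries R).
  case/orP: hn => /node_cherries; lia.
have e1 : size (cp L) <= (nL + nR - 1) ^ (2 * cherries L).
  apply: leq_trans IHL _; apply: exp_mono; lia.
have e2 : size (cp R) <= (nL + nR - 1) ^ (2 * cherries R).
  apply: leq_trans IHR _; apply: exp_mono; lia.
have := pow_lemma (nL + nR - 1) hk.
rewrite mulnDr expnD.
have -> : nL + nR - 1 + 1 = nL + nR by lia.
move: e1 e2; set A := _ ^ (2 * cherries L); set B := _ ^ (2 * cherries R).
move=> e1 e2 h.
have := leq_mul e1 e2.
lia.
Qed.

Theorem mainTheorem6 (T : ptree) :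
  is_node T -> phylo T ->
  exists s : seq (option ptree),
    size s <= (size (leaves T)).+1 ^ (4 * cherries T - 2) /\
    (forall u, cherry_picked T u -> has (oiso u) s).
Proof.
move=> nT pT.
exists (None :: map Some (cp T)); split.
  rewrite /= size_map.
  have hc := node_cherries nT.
  have hk : 2 <= 2 * cherries T by lia.
  have := pow_lemma (size (leaves T)) hk.
  have := size_cp T.
  have : (size (leaves T)).+1 ^ (2 * cherries T) <= (size (leaves T)).+1 ^ (4 * cherries T - 2).
    by apply: leq_pexp2l => //; lia.
  rewrite !addn1.
  move: ((size (leaves T)).+1 ^ (2 * cherries T)) (size (leaves T) ^ (2 * cherries T)) => A B.
  lia.
move=> u /(cp_cover pT); case: u => [t|] h //=.
apply/hasP; exists (Some t); first exact: map_f.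
exact: iso_refl.
Qed.
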